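(* Let $\mathcal{L}$ be a linear space of random variables on $\Omega$ containing all constants, and let $P$ be a coherent$_1$ marginal prevision on $\mathcal{L}$. Let $\mathcal{B}=\{B: B\subseteq\Omega,\ B\in\mathcal{L},\ P(B)>0\}$ (events identified with indicators), and assume $XB\in\mathcal{L}$ for every $X\in\mathcal{L}$ and $B\in\mathcal{B}$. Define $L(X\mid B)=P(XB)/P(B)$ for $X\in\mathcal{L}$, $B\in\mathcal{B}$. Then $L(\cdot\mid\cdot)$ is a finitely additive conditional expectation on $\mathcal{L}\times\mathcal{B}$ (with $L=P$ as the underlying finitely additive expectation on $\mathcal{L}$).
   Context: Random variables are real-valued functions on a nonempty set $\Omega$; events are subsets, identified with indicator functions; $XB$ is the pointwise product. Previsions are extended real numbers; $P(X)=P(X\mid\Omega)$. Coherence$_1$: a collection $\{P(X_i\mid B_i):i\in I\}$ (with nonempty $B_i$) is coherent$_1$ if for every finite $\{i_1,\dots,i_n\}\subseteq I$, all real $\alpha_1,\dots,\alpha_n$ with $\alpha_j\ge 0$ whenever $P(X_{i_j}\mid B_{i_j})=+\infty$ and $\alpha_j\le 0$ whenever $P(X_{i_j}\mid B_{i_j})=-\infty$, and all real $c_j$ with $c_j=P(X_{i_j}\mid B_{i_j})$ whenever finite, $\sup_\omega \sum_{j=1}^n \alpha_j B_{i_j}(\omega)[X_{i_j}(\omega)-c_j]\ge 0$. A finitely additive expectation on a linear space $\mathcal{L}$ containing constants is a map $L:\mathcal{L}\to\mathbb{R}\cup\{\pm\infty\}$ that is nonnegative ($X\le Y$ implies $L(X)\le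 L(Y)$), extended-linear ($L(\alpha X+\beta Y)=\alpha L(X)+\beta L(Y)$ for real $\alpha,\beta$ whenever the right side is not $\infty-\infty$, with $0\times(\pm\infty)=0$), and has $L(1)=1$. Finitely additive conditional expectation: let $\mathcal{L}$ be a linear space of random variables, $\mathcal{B}$ a collection of nonempty events including $\Omega$, with $XB\in\mathcal{L}$ for all $X\in\mathcal{L}$, $B\in\mathcal{B}$, and let $L$ be a finitely additive expectation on $\mathcal{L}$. A map $L(\cdot\mid\cdot):\mathcal{L}\times\mathcal{B}\to\mathbb{R}\cup\{\pm\infty\}$ is a finitely additive conditional expectation if for each $B\in\mathcal{B}$, $L(\cdot\mid B)$ is a finitely additive expectation on $\mathcal{L}$ with $L(XB\mid B)=L(X\mid B)$ for all $X\in\mathcal{L}$, and $\{L(X\mid B):X\in\mathcal{L},B\in\mathcal{B}\}$ is a coherent$_1$ conditional prevision. *)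

(* Defs.v *)
From HB Require Import structures.
From mathcomp Require Import all_boot all_order all_algebra.
From mathcomp Require Import all_classical all_reals ereal numfun.
Set Implicit Arguments. Unset Strict Implicit. Unset Printing Implicit Defensive.
Import Order.TTheory GRing.Theory Num.Theory.
Local Open Scope classical_set_scope.
Local Open Scope ring_scope.
Local Open Scope ereal_scope.

Section Defs.
Variables (Omega : Type) (R : realType).

Definition rv := Omega -> R.

Definition rvI (X : rv) (B : set Omega) : rv := fun w => (X w * \1_B w)%R.

Definition linear_space_const (Lsp : set rv) : Prop :=
  [/\ (forall c : R, Lsp (fun _ => c)),
      (forall X Y, Lsp X -> Lsp Y -> Lsp (fun w => (X w + Y w)%R)) &
      (forall (a : R) X, Lsp X -> Lsp (fun w => (a * X w)%R))].

Definition undef_sum (x y : \bar R) : Prop :=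
  (x = +oo /\ y = -oo) \/ (x = -oo /\ y = +oo).

(* Coherence_1 of a collection {p i = P(X i | B i) : i in D}. Finite subfamilies
   {i_1,...,i_n} of distinct indices are given by an injective idx : 'I_n -> I. *)
Definition coherent1 (I : Type) (D : set I) (X : I -> rv) (B : I -> set Omega)
    (p : I -> \bar R) : Prop :=
  forall (n : nat) (idx : 'I_n -> I), injective idx -> (forall j, D (idx j)) ->
  forall (alpha c : 'I_n -> R),
    (forall j, p (idx j) = +oo -> (0 <= alpha j)%R) ->
    (forall j, p (idx j) = -oo -> (alpha j <= 0)%R) ->
    (forall j, p (idx j) \is a fin_num -> p (idx j) = (c j)%:E) ->
    0 <= ereal_sup [set (\sum_(j < n)
                          alpha j * \1_(B (idx j)) w * (X (idx j) w - c j))%R%:E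
                   | w in [set: Omega]].

Definition coherent1_marginal (Lsp : set rv) (P : rv -> \bar R) : Prop :=
  @coherent1 rv Lsp id (fun _ => [set: Omega]) P.

Definition fa_expectation (Lsp : set rv) (L : rv -> \bar R) : Prop :=
  [/\ (forall X Y, Lsp X -> Lsp Y -> (forall w, (X w <= Y w)%R) -> L X <= L Y),
      (forall (a b : R) X Y, Lsp X -> Lsp Y ->
         ~ undef_sum (a%:E * L X) (b%:E * L Y) ->
         L (fun w => (a * X w + b * Y w)%R) = a%:E * L X + b%:E * L Y) &
      L (fun _ => 1%R) = 1].

Definition fa_cond_expectation (Lsp : set rv) (Bc : set (set Omega))
    (L : rv -> \bar R) (Lc : rv -> set Omega -> \bar R) : Prop :=
  [/\ linear_space_const Lsp /\ Bc [set: Omega] /\ (forall B, Bc B -> B !=set0),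
      (forall X B, Lsp X -> Bc B -> Lsp (rvI X B)),
      fa_expectation Lsp L /\ (forall X, Lsp X -> Lc X [set: Omega] = L X),
      (forall B, Bc B ->
         fa_expectation Lsp (fun X => Lc X B) /\
         (forall X, Lsp X -> Lc (rvI X B) B = Lc X B)) &
      @coherent1 (rv * set Omega) [set XB | Lsp XB.1 /\ Bc XB.2]
                 fst snd (fun XB => Lc XB.1 XB.2)].

Definition pos_events (Lsp : set rv) (P : rv -> \bar R) : set (set Omega) :=
  [set B | Lsp (\1_B) /\ 0 < P (\1_B)].

(* L(X | B) = P(X B) / P(B) (P(B) is a positive real by coherence) *)
Definition cond_ratio (P : rv -> \bar R) (X : rv) (B : set Omega) : \bar R :=
  P (rvI X B) * ((fine (P (\1_B)))^-1)%:E.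

End Defs.

(* Main.v *)
Require Import Defs.
From HB Require Import structures.
From mathcomp Require Import all_boot all_order all_algebra.
From mathcomp Require Import all_classical all_reals ereal numfun.
From mathcomp Require Import ring lra.
From Stdlib Require Import Classical.
Import Order.TTheory GRing.Theory Num.Theory.
Local Open Scope classical_set_scope.
Local Open Scope ring_scope.
Local Open Scope ereal_scope.


Lemma coherent1_gen (Omega : Type) (R : realType) (I : Type) (D : set I)
  (X : I -> rv Omega R) (B : I -> set Omega) (p : I -> \bar R) :
  coherent1 D X B p ->
  forall n (idx : 'I_n -> I), (forall j, D (idx j)) ->
  forall alpha c : 'I_n -> R,
    (forall j, p (idx j) = +oo -> (0 <= alpha j)%R) ->
    (forall j, p (idx j) = -oo -> (alpha j <= 0)%R) ->
    (forall j, p (idx j) \is a fin_num -> p (idx j) = (c j)%:E) ->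
    (forall j k, idx j = idx k -> c j = c k) ->
    0 <= ereal_sup [set (\sum_(j < n)
                          alpha j * \1_(B (idx j)) w * (X (idx j) w - c j))%R%:E
                   | w in [set: Omega]].
Proof.
move=> HC; elim=> [|n IH] idx HD alpha c Hp Hn Hf Hc.
  by apply: HC => // -[].
have [inj|ninj] := pselect (injective idx).
  by apply: HC.
have [j [k [Ejk Njk]]] : exists j k, idx j = idx k /\ j <> k.
  apply: NNPP => H; apply: ninj => a b Eab; apply: NNPP => Nab; apply: H.
  by exists a, b.
pose alpha' := fun i : 'I_n =>
  (alpha (lift k i) + (if lift k i == j then alpha k else 0))%R.
have E : forall w, (\sum_(i < n.+1) alpha i * \1_(B (idx i)) w * (X (idx i) w - c i)
   = \sum_(i < n) alpha' i * \1_(B (idx (lift k i))) w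
        * (X (idx (lift k i)) w - c (lift k i)))%R.
  move=> w.
  pose G := fun i : 'I_n.+1 => ((alpha i + (if i == j then alpha k else 0))
      * \1_(B (idx i)) w * (X (idx i) w - c i))%R.
  have h1 : (\sum_(i < n.+1) G i = \sum_(i < n.+1) alpha i * \1_(B (idx i)) w * (X (idx i) w - c i)
      + alpha k * \1_(B (idx j)) w * (X (idx j) w - c j))%R.
    rewrite /G.
    under eq_bigr do rewrite !mulrDl.
    rewrite big_split /=; congr (_ + _)%R.
    rewrite (bigD1 j) //= eqxx big1 ?addr0 // => i /negPf ->.
    by rewrite !mul0r.
  have h2 : (\sum_(i < n.+1) G i = G k + \sum_(i < n) G (lift k i))%R.
    by rewrite (bigD1_ord k) .
  have Gk : G k = (alpha k * \1_(B (idx k)) w * (X (idx k) w - c k))%R.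
    rewrite /G; have /negPf -> : k != j by apply/eqP => Ek; apply: Njk; rewrite Ek.
    by rewrite addr0.
  have -> : (\sum_(i < n) alpha' i * \1_(B (idx (lift k i))) w
        * (X (idx (lift k i)) w - c (lift k i)) = \sum_(i < n) G (lift k i))%R by [].
  have Hck : c k = c j by apply: Hc; rewrite Ejk.
  have : (\sum_(i < n.+1) alpha i * \1_(B (idx i)) w * (X (idx i) w - c i)
      + alpha k * \1_(B (idx j)) w * (X (idx j) w - c j)
      = alpha k * \1_(B (idx j)) w * (X (idx j) w - c j) + \sum_(i < n) G (lift k i))%R.
    by rewrite -h1 h2 Gk -Ejk Hck.
  by rewrite addrC => /addrI.
rewrite (eq_imagel (f' := fun w => (\sum_(i < n) alpha' i * \1_(B (idx (lift k i))) w
        * (X (idx (lift k i)) w - c (lift k i)))%R%:E)); last by move=> w _; rewrite E.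
apply: (IH (fun i => idx (lift k i))) => //.
- move=> i Hi; rewrite /alpha'; case: eqP => [Ej|_]; last by rewrite addr0; apply: Hp.
  have h1 := Hp _ Hi; have h2 : (0 <= alpha k)%R by apply: Hp; rewrite -Ejk -Ej.
  lra.
- move=> i Hi; rewrite /alpha'; case: eqP => [Ej|_]; last by rewrite addr0; apply: Hn.
  have h1 := Hn _ Hi; have h2 : (alpha k <= 0)%R by apply: Hn; rewrite -Ejk -Ej.
  lra.
- by move=> i Hi; apply: Hf.
- by move=> i i' Ei; apply: Hc.
Qed.


Definition hv (R : realType) (M1 M2 : R) (x : \bar R) : R :=
  match x with EFin r => r | EPInf => M1 | ENInf => M2 end.

Definition idx3 (T : Type) (a b c : T) (i : 'I_3) : T := nth a [:: a; b; c] i.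
Arguments hv {R}.
Arguments idx3 {T}.

Lemma coh3 (Omega : Type) (R : realType) (Lsp : set (rv Omega R)) (P : rv Omega R -> \bar R) :
  coherent1_marginal Lsp P ->
  forall (U1 U2 U3 : rv Omega R) (a1 a2 a3 M1 M2 r : R),
  Lsp U1 -> Lsp U2 -> Lsp U3 ->
  (P U1 = +oo -> 0 <= a1)%R -> (P U1 = -oo -> a1 <= 0)%R ->
  (P U2 = +oo -> 0 <= a2)%R -> (P U2 = -oo -> a2 <= 0)%R ->
  (P U3 = +oo -> 0 <= a3)%R -> (P U3 = -oo -> a3 <= 0)%R ->
  (forall w, a1 * (U1 w - hv M1 M2 (P U1)) + a2 * (U2 w - hv M1 M2 (P U2))
             + a3 * (U3 w - hv M1 M2 (P U3)) <= r)%R ->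
  (0 <= r)%R.
Proof.
move=> HP U1 U2 U3 a1 a2 a3 M1 M2 r L1 L2 L3 p1 n1 p2 n2 p3 n3 Hw.
have := @coherent1_gen _ _ _ _ _ _ _ HP 3 (idx3 U1 U2 U3) _ (idx3 a1 a2 a3)
  (fun i => hv M1 M2 (P (idx3 U1 U2 U3 i))).
move=> H.
have {H} H : 0 <= ereal_sup [set (\sum_(j < 3) idx3 a1 a2 a3 j * \1_([set: Omega]) w *
   (idx3 U1 U2 U3 j w - hv M1 M2 (P (idx3 U1 U2 U3 j))))%R%:E | w in [set: Omega]].
  apply: H.
  - by move=> [[|[|[|m]]] Hm].
  - by move=> [[|[|[|m]]] Hm] //=; auto.
  - by move=> [[|[|[|m]]] Hm] //=; auto.
  - by move=> j; case: (P (idx3 U1 U2 U3 j)).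
  - by move=> j k ->.
rewrite -lee_fin; apply: (le_trans H); apply: ge_ereal_sup => y [w _ <-].
rewrite lee_fin !big_ord_recr big_ord0 /= indicT /cst /=.
have := Hw w; rewrite /idx3 /=; lra.
Qed.
Arguments coh3 {Omega R Lsp P}.


Ltac clean := repeat match goal with H : @eq (\bar _) _ _ |- _ => clear H end.
Ltac lr := clean; lra.
Ltac xf h := exfalso; clear -h; lra.
Ltac xfe h e := exfalso; clear -h e; lra.

Ltac sc := solve [ by [] | (move=> _; lr) | (move=> E; exfalso; by auto)
                 | (move=> E; exfalso; match goal with H : _ <> _ |- _ => by apply: H end) ].

Lemma P_const (Omega : Type) (R : realType) (Lsp : set (rv Omega R)) (P : rv Omega R -> \bar R) :
  linear_space_const Lsp -> coherent1_marginal Lsp P ->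
  forall k : R, P (fun _ => k) = k%:E.
Proof.
move=> [Hc Ha Hs] HP k.
have D1 M1 M2 : P (fun _ => k) <> -oo -> (0 <= k - hv M1 M2 (P (fun _ => k)))%R.
  move=> h; apply: (coh3 HP (fun _ => k) (fun _ => k) (fun _ => k) 1%R 0%R 0%R M1 M2) => //; try sc.
  all: try (by move=> w /=; lra).
have D2 M1 M2 : P (fun _ => k) <> +oo -> (0 <= hv M1 M2 (P (fun _ => k)) - k)%R.
  move=> h; apply: (coh3 HP (fun _ => k) (fun _ => k) (fun _ => k) (-1)%R 0%R 0%R M1 M2) => //; try sc.
  all: try (by move=> w /=; lra).
case E: (P (fun _ => k)) D1 D2 => [u||] D1 D2.
- have := D1 0%R 0%R ltac:(by []); have := D2 0%R 0%R ltac:(by []) => /=.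
  by move=> h1 h2; congr (_%:E); clear -h1 h2; lra.
- by have := D1 (k + 1)%R 0%R ltac:(by []) => /= h; exfalso; clear -h; lra.
- by have := D2 0%R (k - 1)%R ltac:(by []) => /= h; exfalso; clear -h; lra.
Qed.

Lemma P_mono (Omega : Type) (R : realType) (Lsp : set (rv Omega R)) (P : rv Omega R -> \bar R) :
  coherent1_marginal Lsp P ->
  forall X Y, Lsp X -> Lsp Y -> (forall w, X w <= Y w)%R -> P X <= P Y.
Proof.
move=> HP X Y LX LY H.
have D M1 M2 : P X <> -oo -> P Y <> +oo -> (0 <= hv M1 M2 (P Y) - hv M1 M2 (P X))%R.
  move=> h1 h2; apply: (coh3 HP X Y X 1%R (-1)%R 0%R M1 M2) => //; try sc.
  all: try (by move=> w; have := H w; clear; lra).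
case EX: (P X) D => [x||] D; case EY: (P Y) D => [y||] D.
- by have := D 0%R 0%R ltac:(by []) ltac:(by []) => /= h; rewrite lee_fin; clear -h; lra.
- exact: leey.
- by have := D 0%R (x - 1)%R ltac:(by []) ltac:(by []) => /= h; exfalso; clear -h; lra.
- by have := D (y + 1)%R 0%R ltac:(by []) ltac:(by []) => /= h; exfalso; clear -h; lra.
- by [].
- by have := D 1%R 0%R ltac:(by []) ltac:(by []) => /= h; exfalso; clear -h; lra.
- exact: leNye.
- exact: leNye.
- exact: leNye.
Qed.

Lemma P_hom (Omega : Type) (R : realType) (Lsp : set (rv Omega R)) (P : rv Omega R -> \bar R) :
  linear_space_const Lsp -> coherent1_marginal Lsp P ->
  forall (a : R) X, Lsp X -> P (fun w => a * X w)%R = a%:E * P X.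
Proof.
move=> [Hc Ha Hs] HP a X LX.
set Y := (fun w => a * X w)%R.
have LY : Lsp Y by apply: Hs.
have D1 M1 M2 : (P X = +oo -> 0 <= a)%R -> (P X = -oo -> a <= 0)%R -> P Y <> +oo ->
    (0 <= hv M1 M2 (P Y) - a * hv M1 M2 (P X))%R.
  move=> h1 h2 h3; apply: (coh3 HP X Y X a (-1)%R 0%R M1 M2) => //; try sc.
  all: try (by move=> w; rewrite /Y; clear; lra).
have D2 M1 M2 : (P X = +oo -> a <= 0)%R -> (P X = -oo -> 0 <= a)%R -> P Y <> -oo ->
    (0 <= a * hv M1 M2 (P X) - hv M1 M2 (P Y))%R.
  move=> h1 h2 h3; apply: (coh3 HP X Y X (-a)%R 1%R 0%R M1 M2) => //; try sc.
  all: try (by move=> h; have := h1 h; clear; lra).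
  all: try (by move=> h; have := h2 h; clear; lra).
  all: try (by move=> w; rewrite /Y; clear; lra).
clearbody Y.
have [a0|a0|a0] := ltgtP a 0%R.
-
  have an0 : a != 0%R by rewrite ltr0_neq0.
  case EX: (P X) D1 D2 => [x||] D1 D2; case EY: (P Y) D1 D2 => [y||] D1 D2 /=.
  + have := D1 0%R 0%R ltac:(by []) ltac:(by []) ltac:(by []);
    have := D2 0%R 0%R ltac:(by []) ltac:(by []) ltac:(by []) => /= h1 h2.
    by congr (_%:E); clear -h1 h2; nra.
  + by have := D2 (a * x + 1)%R 0%R ltac:(by []) ltac:(by []) ltac:(by []) => /= h; xf h.
  + by have := D1 0%R (a * x - 1)%R ltac:(by []) ltac:(by []) ltac:(by []) => /= h; xf h.
  + have e : (a * ((y - 1) / a) = y - 1)%R by field.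
    by have := D2 ((y - 1) / a)%R 0%R ltac:(move=> _; lra) ltac:(by []) ltac:(by []) => /= h; xfe h e.
  + by have := D2 1%R 0%R ltac:(move=> _; lra) ltac:(by []) ltac:(by []) => /= h; xfe h a0.
  + by rewrite lt0_muley // lte_fin.
  + have e : (a * ((y + 1) / a) = y + 1)%R by field.
    by have := D1 0%R ((y + 1) / a)%R ltac:(by []) ltac:(move=> _; lra) ltac:(by []) => /= h; xfe h e.
  + by rewrite lt0_muleNy // lte_fin.
  + by have := D1 0%R (-1)%R ltac:(by []) ltac:(move=> _; lra) ltac:(by []) => /= h; xfe h a0.
-
  have an0 : a != 0%R by rewrite lt0r_neq0.
  case EX: (P X) D1 D2 => [x||] D1 D2; case EY: (P Y) D1 D2 => [y||] D1 D2 /=.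
  + have := D1 0%R 0%R ltac:(by []) ltac:(by []) ltac:(by []);
    have := D2 0%R 0%R ltac:(by []) ltac:(by []) ltac:(by []) => /= h1 h2.
    by congr (_%:E); clear -h1 h2; lra.
  + by have := D2 (a * x + 1)%R 0%R ltac:(by []) ltac:(by []) ltac:(by []) => /= h; xf h.
  + by have := D1 0%R (a * x - 1)%R ltac:(by []) ltac:(by []) ltac:(by []) => /= h; xf h.
  + have e : (a * ((y + 1) / a) = y + 1)%R by field.
    by have := D1 ((y + 1) / a)%R 0%R ltac:(move=> _; lra) ltac:(by []) ltac:(by []) => /= h; xfe h e.
  + by rewrite gt0_muley // lte_fin.
  + have e : (a * (1 / a) = 1)%R by field.
    by have := D1 (1 / a)%R 0%R ltac:(move=> _; lra) ltac:(by []) ltac:(by []) => /= h; xfe h e.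
  + have e : (a * ((y - 1) / a) = y - 1)%R by field.
    by have := D2 0%R ((y - 1) / a)%R ltac:(by []) ltac:(move=> _; lra) ltac:(by []) => /= h; xfe h e.
  + have e : (a * (-1 / a) = -1)%R by field.
    by have := D2 0%R (-1 / a)%R ltac:(by []) ltac:(move=> _; lra) ltac:(by []) => /= h; xfe h e.
  + by rewrite gt0_muleNy // lte_fin.
-
  subst a; rewrite mul0e.
  case EY: (P Y) D1 D2 => [y||] D1 D2.
  + have := D1 0%R 0%R ltac:(move=> _; lra) ltac:(move=> _; lra) ltac:(by []);
    have := D2 0%R 0%R ltac:(move=> _; lra) ltac:(move=> _; lra) ltac:(by []) => /= h1 h2.
    by congr (_%:E); clear -h1 h2; lra.
  + by have := D2 1%R 0%R ltac:(move=> _; lra) ltac:(move=> _; lra) ltac:(by []) => /= h; xf h.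
  + by have := D1 0%R (-1)%R ltac:(move=> _; lra) ltac:(move=> _; lra) ltac:(by []) => /= h; xf h.
Qed.

Lemma P_add (Omega : Type) (R : realType) (Lsp : set (rv Omega R)) (P : rv Omega R -> \bar R) :
  linear_space_const Lsp -> coherent1_marginal Lsp P ->
  forall X Y, Lsp X -> Lsp Y -> ~ undef_sum (P X) (P Y) ->
  P (fun w => X w + Y w)%R = P X + P Y.
Proof.
move=> [Hc Ha Hs] HP X Y LX LY Hu.
set Z := (fun w => X w + Y w)%R.
have LZ : Lsp Z by apply: Ha.
have D1 M1 M2 : P X <> +oo -> P Y <> +oo -> P Z <> -oo ->
    (0 <= hv M1 M2 (P X) + hv M1 M2 (P Y) - hv M1 M2 (P Z))%R.
  move=> h1 h2 h3; apply: (coh3 HP X Y Z (-1)%R (-1)%R 1%R M1 M2) => //; try sc.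
  all: try (by move=> w; rewrite /Z; clear; lra).
have D2 M1 M2 : P X <> -oo -> P Y <> -oo -> P Z <> +oo ->
    (0 <= hv M1 M2 (P Z) - hv M1 M2 (P X) - hv M1 M2 (P Y))%R.
  move=> h1 h2 h3; apply: (coh3 HP X Y Z 1%R 1%R (-1)%R M1 M2) => //; try sc.
  all: try (by move=> w; rewrite /Z; clear; lra).
clearbody Z.
case EX: (P X) Hu D1 D2 => [x||] Hu D1 D2; case EY: (P Y) Hu D1 D2 => [y||] Hu D1 D2;
  try (by exfalso; apply: Hu; rewrite /undef_sum; first [by left | by right]);
  case EZ: (P Z) D1 D2 => [z||] D1 D2.
- have := D1 0%R 0%R ltac:(by []) ltac:(by []) ltac:(by []);
  have := D2 0%R 0%R ltac:(by []) ltac:(by []) ltac:(by []) => /= h1 h2.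
  by congr (_%:E); clear -h1 h2; lra.
- by have := D1 (x + y + 1)%R 0%R ltac:(by []) ltac:(by []) ltac:(by []) => /= h; xf h.
- by have := D2 0%R (x + y - 1)%R ltac:(by []) ltac:(by []) ltac:(by []) => /= h; xf h.
- by have := D2 (z - x + 1)%R 0%R ltac:(by []) ltac:(by []) ltac:(by []) => /= h; xf h.
- by [].
- by have := D2 (1 - x)%R 0%R ltac:(by []) ltac:(by []) ltac:(by []) => /= h; xf h.
- by have := D1 0%R (z - x - 1)%R ltac:(by []) ltac:(by []) ltac:(by []) => /= h; xf h.
- by have := D1 0%R (- x - 1)%R ltac:(by []) ltac:(by []) ltac:(by []) => /= h; xf h.
- by [].
- by have := D2 (z - y + 1)%R 0%R ltac:(by []) ltac:(by []) ltac:(by []) => /= h; xf h.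
- by [].
- by have := D2 (1 - y)%R 0%R ltac:(by []) ltac:(by []) ltac:(by []) => /= h; xf h.
- by have := D2 (z / 2 + 1)%R 0%R ltac:(by []) ltac:(by []) ltac:(by []) => /= h; xf h.
- by [].
- by have := D2 1%R 0%R ltac:(by []) ltac:(by []) ltac:(by []) => /= h; xf h.
- by have := D1 0%R (z - y - 1)%R ltac:(by []) ltac:(by []) ltac:(by []) => /= h; xf h.
- by have := D1 0%R (- y - 1)%R ltac:(by []) ltac:(by []) ltac:(by []) => /= h; xf h.
- by [].
- by have := D1 0%R (z / 2 - 1)%R ltac:(by []) ltac:(by []) ltac:(by []) => /= h; xf h.
- by have := D1 0%R (-1)%R ltac:(by []) ltac:(by []) ltac:(by []) => /= h; xf h.
- by [].
Qed.
Arguments P_const {Omega R Lsp P}.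
Arguments P_mono {Omega R Lsp P}.
Arguments P_hom {Omega R Lsp P}.
Arguments P_add {Omega R Lsp P}.


Lemma P_lin (Omega : Type) (R : realType) (Lsp : set (rv Omega R)) (P : rv Omega R -> \bar R) :
  linear_space_const Lsp -> coherent1_marginal Lsp P ->
  forall (a b : R) X Y, Lsp X -> Lsp Y -> ~ undef_sum (a%:E * P X) (b%:E * P Y) ->
  P (fun w => a * X w + b * Y w)%R = a%:E * P X + b%:E * P Y.
Proof.
move=> HL HP a b X Y LX LY Hu.
have [Hc Ha Hs] := HL.
rewrite -(P_hom HL HP a X LX) -(P_hom HL HP b Y LY).
apply: (P_add HL HP (fun w => a * X w)%R (fun w => b * Y w)%R).
- exact: Hs.
- exact: Hs.
- by rewrite (P_hom HL HP a X LX) (P_hom HL HP b Y LY).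
Qed.

Arguments P_lin {Omega R Lsp P}.

Lemma fa_P (Omega : Type) (R : realType) (Lsp : set (rv Omega R)) (P : rv Omega R -> \bar R) :
  linear_space_const Lsp -> coherent1_marginal Lsp P -> fa_expectation Lsp P.
Proof.
move=> HL HP; split.
- by move=> X Y LX LY H; exact: (P_mono HP X Y LX LY H).
- by move=> a b X Y LX LY Hu; exact: (P_lin HL HP a b X Y LX LY Hu).
- exact: (P_const HL HP 1%R).
Qed.

Lemma mulk_inf (R : realType) (u : \bar R) (k : R) : (0 < k)%R ->
  (u * k%:E = +oo <-> u = +oo) /\ (u * k%:E = -oo <-> u = -oo).
Proof.
move=> k0; case: u => [r||] /=.
- by split; split.
- by rewrite gt0_mulye ?lte_fin.
- by rewrite gt0_mulNye ?lte_fin.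
Qed.

Lemma P_sup (Omega : Type) (R : realType) (w0 : Omega) (Lsp : set (rv Omega R)) (P : rv Omega R -> \bar R) :
  coherent1_marginal Lsp P ->
  forall Z, Lsp Z -> 0 <= P Z -> 0 <= ereal_sup [set (Z w)%:E | w in [set: Omega]].
Proof.
move=> HP Z LZ PZ.
set s := ereal_sup _.
have us : forall w, (Z w)%:E <= s.
  move=> w; apply: le_ereal_sup_tmp; exists (Z w)%:E => //; by exists w.
clearbody s.
case: (leP 0 s) => // s0; exfalso.
case Es: s us s0 => [r||] us s0.
- have hr : forall w, (Z w <= r)%R by move=> w; rewrite -lee_fin; exact: us.
  have h0 : (0 <= hv 0%R 0%R (P Z))%R.
    by case: (P Z) PZ => [u||] //=; rewrite lee_fin.
  have := coh3 HP Z Z Z 1%R 0%R 0%R 0%R 0%R (r - hv 0%R 0%R (P Z))%R LZ LZ LZ.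
  have hNy : P Z <> -oo by move=> E; rewrite E in PZ.
  move=> /(_ ltac:(move=> _; lra) ltac:(by move=> /hNy) ltac:(move=> _; lra)
     ltac:(move=> _; lra) ltac:(move=> _; lra) ltac:(move=> _; lra)).
  have : (r < 0)%R by rewrite -lte_fin.
  move=> rlt /(_ ltac:(move=> w; have := hr w; lra)).
  move=> h; clear -h h0 rlt; lra.
- by [].
- by have := us w0.
Qed.


Arguments fa_P {Omega R Lsp P}.
Arguments P_sup {Omega R} w0 {Lsp P}.

Lemma P_sum_ge0 (Omega : Type) (R : realType) (Lsp : set (rv Omega R)) (P : rv Omega R -> \bar R) :
  linear_space_const Lsp -> coherent1_marginal Lsp P ->
  forall n (f : 'I_n -> rv Omega R), (forall j, Lsp (f j)) -> (forall j, 0 <= P (f j)) ->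
  Lsp (fun w => \sum_(j < n) f j w)%R /\ 0 <= P (fun w => \sum_(j < n) f j w)%R.
Proof.
move=> HL HP; have [Hc Ha Hs] := HL.
elim=> [|n IH] f Lf Pf.
  have -> : (fun w => \sum_(j < 0) f j w)%R = (fun _ => 0%R).
    by apply: funext => w; rewrite big_ord0.
  by split; [apply: Hc | rewrite (P_const HL HP 0%R)].
have -> : (fun w => \sum_(j < n.+1) f j w)%R =
   (fun w => (fun w => \sum_(j < n) f (widen_ord (leqnSn n) j) w) w + f ord_max w)%R.
  by apply: funext => w; rewrite big_ord_recr.
have [L1 P1] := IH (fun j => f (widen_ord (leqnSn n) j)) (fun j => Lf _) (fun j => Pf _).
split; first by apply: Ha.
rewrite (P_add HL HP _ _ L1 (Lf ord_max)); first exact: adde_ge0.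
rewrite /undef_sum => -[[_ E]|[E _]].
- by have := Pf ord_max; rewrite E.
- by move: P1; rewrite E.
Qed.
Arguments P_sum_ge0 {Omega R Lsp P}.

Theorem proposition6p1 (Omega : Type) (R : realType) (w0 : Omega)
    (Lsp : set (rv Omega R)) (P : rv Omega R -> \bar R) :
  linear_space_const Lsp ->
  coherent1_marginal Lsp P ->
  (forall X B, Lsp X -> pos_events Lsp P B -> Lsp (rvI X B)) ->
  fa_cond_expectation Lsp (pos_events Lsp P) P (cond_ratio P).
Proof.
move=> HL HP Hcl.
have [Hc Ha Hs] := HL.
have P1 : P (fun _ => 1%R) = 1 := P_const HL HP 1%R.
have PT : P (\1_[set: Omega]) = 1 by rewrite indicT; exact: P1.
have LT : Lsp \1_[set: Omega] by rewrite indicT; exact: Hc.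
have PB : forall B, pos_events Lsp P B ->
    P (\1_B) = (fine (P \1_B))%:E /\ (0 < fine (P \1_B))%R.
  move=> B [LB PB0].
  have : P \1_B <= 1.
    rewrite -P1; apply: (P_mono HP _ _ LB (Hc 1%R)) => w; rewrite indicE.
    by case: (w \in B).
  case: (P \1_B) PB0 => [r||] //=.
split.
- split; first exact: HL.
  split.
  + by split => //; rewrite PT lte_fin ltr01.
  + move=> B HB; have [E B0] := PB B HB.
    apply/set0P/eqP => B0'; move: B0; rewrite B0' indic0.
    by rewrite (P_const HL HP 0%R) /= ltxx.
- exact: Hcl.
- split; first exact: fa_P HL HP.
  move=> X LX; rewrite /cond_ratio PT /=.
  have -> : rvI X [set: Omega] = X.
    by apply: funext => w; rewrite /rvI indicT /cst mulr1.
  by rewrite invr1 mule1.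
- move=> B HB; have [EB pB0] := PB B HB; set pB := fine _ in EB pB0 *.
  set k := (pB^-1)%R.
  have k0 : (0 < k)%R by rewrite invr_gt0.
  split.
  + split.
    * move=> X Y LX LY H; rewrite /cond_ratio; apply: lee_wpmul2r.
        by rewrite lee_fin ltW.
      apply: (P_mono HP); [exact: Hcl|exact: Hcl|].
      move=> w; rewrite /rvI; apply: ler_wpM2r; last exact: H.
      by rewrite indicE; case: (_ \in _).
    * move=> a b X Y LX LY Hu; rewrite /cond_ratio in Hu *.
      have -> : rvI (fun w => a * X w + b * Y w)%R B =
                (fun w => a * rvI X B w + b * rvI Y B w)%R.
        by apply: funext => w; rewrite /rvI; ring.
      have [n1 n2] := @mulk_inf _ (a%:E * P (rvI X B)) k k0.
      have [n3 n4] := @mulk_inf _ (b%:E * P (rvI Y B)) k k0.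
      have Hu2 : ~ undef_sum (a%:E * P (rvI X B)) (b%:E * P (rvI Y B)).
        move=> Hu'; apply: Hu; rewrite /k !muleA.
        case: Hu' => [[e1 e2]|[e1 e2]]; [left|right]; split.
        - exact/n1.
        - exact/n4.
        - exact/n2.
        - exact/n3.
      rewrite (P_lin HL HP a b _ _ (Hcl _ _ LX HB) (Hcl _ _ LY HB) Hu2).
      rewrite muleDl //; last first.
        apply/andP; split; apply/negP => /andP[/eqP e1 /eqP e2]; apply: Hu2.
        - by left.
        - by right.
      by rewrite !muleA.
    * rewrite /cond_ratio.
      have -> : rvI (fun _ => 1%R : R) B = \1_B :> rv Omega R.
        by apply: funext => w; rewrite /rvI mul1r.
      rewrite EB /k -EFinM mulfV //.
      exact: lt0r_neq0.
  + move=> X LX; rewrite /cond_ratio; congr (P _ * _).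
    apply: funext => w; rewrite /rvI indicE.
    by case: (w \in B); rewrite /= ?mulr1 ?mulr0.
- move=> n idx inj HD alpha c Hp Hn Hf.
  pose f := (fun j w => alpha j * \1_((idx j).2) w * ((idx j).1 w - c j))%R.
  have LPf : forall j, Lsp (f j) /\ 0 <= P (f j).
    move=> j.
    have [LXj HBj] := HD j.
    move: (Hp j) (Hn j) (Hf j) => /= Hpj Hnj Hfj.
    rewrite /f.
    move: (idx j) LXj HBj Hpj Hnj Hfj => [X B] /= LX HB Hpj Hnj Hfj.
    have [EB pB0] := PB B HB; set pB := fine _ in EB pB0 *.
    have LB : Lsp (\1_B) by case: HB.
    pose V := (fun w => 1 * rvI X B w + (- c j) * \1_B w)%R.
    have LV : Lsp V by apply: Ha; apply: Hs; [exact: Hcl | exact: LB].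
    have -> : (fun w => alpha j * \1_B w * (X w - c j))%R = (fun w => alpha j * V w)%R.
      by apply: funext => w; rewrite /V /rvI /=; ring.
    split; first by apply: Hs.
    rewrite (P_hom HL HP (alpha j) V LV).
    rewrite /V (P_lin HL HP 1%R (- c j)%R _ _ (Hcl _ _ LX HB) LB); last first.
      by rewrite EB -EFinM => -[[_ E]|[_ E]].
    rewrite EB mul1e -EFinM.
    move: Hpj Hnj Hfj; rewrite /cond_ratio.
    case EXB: (P (rvI X B)) => [u||] Hpj Hnj Hfj.
    + have := Hfj ltac:(by rewrite -EFinM).
      rewrite -EFinM => -[ec].
      have e : (u + - (u * pB^-1) * pB = 0)%R.
        by field; exact: lt0r_neq0.
      by rewrite -ec -EFinD e mule0.
    + have a0 : (0 <= alpha j)%R by apply: Hpj; rewrite gt0_mulye // lte_fin invr_gt0.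
      by apply: mule_ge0; rewrite ?lee_fin // leey.
    + have a0 : (alpha j <= 0)%R by apply: Hnj; rewrite gt0_mulNye // lte_fin invr_gt0.
      by apply: mule_le0; rewrite ?lee_fin // leNye.
  have [LZ PZ] := P_sum_ge0 HL HP n f (fun j => (LPf j).1) (fun j => (LPf j).2).
  exact: (P_sup w0 HP _ LZ PZ).
Qed.
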